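(* Let $\mu:\mathbb{N}\to\mathbb{R}$ with increments $\gamma(n)=\mu(n+1)-\mu(n)$ satisfying $\gamma(n)\ge0$ and $\gamma(n+1)\le\gamma(n)$ for all $n\in\mathbb{N}$. Let $T,N,h$ be integers with $N\ge2$, $N\le T-1$ and $1\le h\le\lfloor N/2\rfloor$, and define $$\bar\mu=\frac1h\sum_{l=N-h+1}^{N}\mu(l).$$ Then $\bar\mu\le\mu(T)$ and $$\mu(T)-\bar\mu\le\frac12(2T-2N+h-1)\,\gamma(N-h+1).$$
   Context: In the paper $\mu$ is the expected-reward function of an arm (indexed by number of pulls), $N$ is the number of pulls of the arm before some round $t\le T$, and $h$ is the window width. *)

(* Defs.v *)
From Stdlib Require Import Reals Lra Lia.
Open Scope R_scope.

Definition incr (mu : nat -> R) (n : nat) : R := mu (S n) - mu n.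

(* mubar = (1/h) * sum_{l = N-h+1}^{N} mu(l) ;  requires h >= 1 *)
Definition mubar (mu : nat -> R) (N h : nat) : R :=
  (/ INR h) * sum_f_R0 (fun k => mu (N - h + 1 + k)%nat) (h - 1).

(* Main.v *)
Require Import Defs.
From Stdlib Require Import Reals Lra Lia.
Open Scope R_scope.

Lemma mono_k (mu : nat -> R) (Hgpos : forall n : nat, 0 <= incr mu n) :
  forall n k, mu n <= mu (n + k)%nat.
Proof.
  intros n k; induction k as [|k IH].
  - rewrite Nat.add_0_r; lra.
  - replace (n + S k)%nat with (S (n + k)) by lia.
    specialize (Hgpos (n + k)%nat); unfold incr in Hgpos; lra.
Qed.

Lemma gdec_k (mu : nat -> R) (Hgdec : forall n : nat, incr mu (S n) <= incr mu n) :
  forall a j, incr mu (a + j)%nat <= incr mu a.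
Proof.
  intros a j; induction j as [|j IH].
  - rewrite Nat.add_0_r; lra.
  - replace (a + S j)%nat with (S (a + j)) by lia.
    specialize (Hgdec (a + j)%nat); lra.
Qed.

Lemma lin_k (mu : nat -> R) (Hgdec : forall n : nat, incr mu (S n) <= incr mu n) :
  forall a n k, (a <= n)%nat -> mu (n + k)%nat - mu n <= INR k * incr mu a.
Proof.
  intros a n k Han; induction k as [|k IH].
  - rewrite Nat.add_0_r; simpl; lra.
  - replace (n + S k)%nat with (S (n + k)) by lia.
    rewrite S_INR.
    pose proof (gdec_k mu Hgdec a (n + k - a)) as G.
    replace (a + (n + k - a))%nat with (n + k)%nat in G by lia.
    rewrite Rmult_plus_distr_r, Rmult_1_l. unfold incr in G, IH |- *; lra.
Qed.

Lemma sum_lin (A B : R) : forall m,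
  sum_f_R0 (fun k => A - B * INR k) m = INR (S m) * A - B * INR m * INR (S m) / 2.
Proof.
  induction m as [|m IH].
  - simpl; lra.
  - simpl sum_f_R0. rewrite IH. rewrite !S_INR. simpl. destruct m; simpl; lra.
Qed.

Theorem lemma7 (mu : nat -> R) (T N h : nat)
  (Hgpos : forall n : nat, 0 <= incr mu n)
  (Hgdec : forall n : nat, incr mu (S n) <= incr mu n)
  (HN2 : (2 <= N)%nat) (HNT : (N + 1 <= T)%nat)
  (Hh1 : (1 <= h)%nat) (HhN : (h <= N / 2)%nat) :
  mubar mu N h <= mu T /\
  mu T - mubar mu N h <=
    / 2 * (2 * INR T - 2 * INR N + INR h - 1) * incr mu (N - h + 1)%nat.
Proof.
  assert (Hh2 : (2 * h <= N)%nat).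
  { pose proof (Nat.Div0.mul_div_le N 2). lia. }
  unfold mubar.
  set (a := (N - h + 1)%nat).
  set (g := incr mu a).
  assert (Hg : 0 <= g) by apply Hgpos.
  set (S0 := sum_f_R0 (fun k => mu (a + k)%nat) (h - 1)).
  assert (Hup : S0 <= sum_f_R0 (fun k => mu T) (h - 1)).
  { apply sum_Rle. intros k Hk.
    pose proof (mono_k mu Hgpos (a + k) (T - (a + k))) as M.
    replace (a + k + (T - (a + k)))%nat with T in M by lia. exact M. }
  assert (Hlo : sum_f_R0 (fun k => (mu T - INR (T - a) * g) - (- g) * INR k) (h - 1) <= S0).
  { apply sum_Rle. intros k Hk.
    pose proof (lin_k mu Hgdec a (a + k) (T - (a + k)) ltac:(lia)) as L.
    replace (a + k + (T - (a + k)))%nat with T in L by lia.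
    rewrite minus_INR in L by lia. rewrite minus_INR by lia.
    rewrite plus_INR in L. fold g in L.
    rewrite Rmult_minus_distr_r, Rmult_plus_distr_r in L. rewrite Rmult_minus_distr_r. clearbody g a. nra. }
  rewrite sum_lin in Hlo.
  assert (Hc : sum_f_R0 (fun _ => mu T) (h - 1) = INR h * mu T).
  { assert (E : forall m, sum_f_R0 (fun _ => mu T) m = INR (S m) * mu T).
    { induction m; simpl sum_f_R0. simpl; lra. rewrite IHm. rewrite !S_INR. lra. }
    rewrite E. f_equal. f_equal. lia. }
  rewrite Hc in Hup.
  replace (S (h - 1)) with h in Hlo by lia.
  rewrite minus_INR in Hlo by lia.
  rewrite minus_INR in Hlo by lia.
  unfold a in Hlo. rewrite plus_INR, minus_INR in Hlo by lia. simpl INR in Hlo.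
  assert (Hhp : 1 <= INR h) by (apply (le_INR 1); lia).
  split.
  - apply (Rmult_le_reg_l (INR h)); [lra|].
    rewrite <- Rmult_assoc, Rinv_r by lra. lra.
  - apply (Rmult_le_reg_l (INR h)); [lra|].
    rewrite Rmult_minus_distr_l, <- Rmult_assoc, Rinv_r by lra.
    fold S0. nra.
Qed.
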